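(* Let $k\ge2$ and $n\ge1$ be integers. A function $f:\mathcal{S}_k^n\to\mathbf{R}\cup\{\infty\}$ is $k$-submodular if and only if $f$ is submodular on the modular semilattice $\mathcal{S}_k^n$.
   Context: $\mathcal{S}_k$ is the $(k+1)$-element poset consisting of a minimum $0$ and $k$ pairwise incomparable elements covering $0$; $\mathcal{S}_k^n$ has the componentwise order (a modular semilattice; rank $r(p)=$ number of nonzero coordinates). For $p,q\in\mathcal{S}_k^n$: $(p\wedge q)_i=p_i$ if $p_i=q_i$ and $0$ otherwise; $(p\sqcup q)_i=p_i\vee q_i$ if $p_i,q_i$ are comparable (equal or one is $0$) and $0$ if $0\ne p_i\ne q_i\ne0$. $f$ is $k$-submodular if $f(p)+f(q)\ge f(p\wedge q)+f(p\sqcup q)$ for all $p,q$. Submodularity on a modular semilattice $\mathcal{L}$ (rank $r$): for $p,q$ let $I(p,q)$ be the elements on shortest $p$–$q$ paths of the covering graph; $r(u;p,q)=(r(u\wedge p)-r(p\wedge q),r(u\wedge q)-r(p\wedge q))$; $\mathcal{E}(p,q)$ the $u\in I(p,q)$ with $r(u;p,q)$ a componentwise-maximal extreme point of the convex hull $\mathrm{Conv}I(p,q)$; $C(u;p,q)=\{w\in\mathbf{R}^2_{\ge0}:\langle w,r(u;p,q)\rangle=\max_{z\in\mathrm{Conv}I(p,q)}\langle w,z\rangle\}=\{(x,y)\ge0:y\cos\alpha\le x\sin\alpha,\ y\cos\beta\ge x\sin\beta\}$ ($0\le\beta\le\alpha\le\pi/2$), $[C]=\frac{\sin\alpha}{\sin\alpha+\cos\alpha}-\frac{\sin\beta}{\sin\beta+\cos\beta}$.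 $f$ is submodular if $f(p)+f(q)\ge f(p\wedge q)+\sum_{u\in\mathcal{E}(p,q)}[C(u;p,q)]f(u)$ for all $p,q$ (zero-coefficient terms omitted; $a+\infty=\infty$). *)

(* Defs.v *)
From HB Require Import structures.
From mathcomp Require Import all_boot all_order all_algebra.
From mathcomp Require Import boolp classical_sets reals ereal trigo.

Set Implicit Arguments.
Unset Strict Implicit.
Unset Printing Implicit Defensive.

Import Order.TTheory GRing.Theory Num.Theory.
Local Open Scope ring_scope.

Section SemilatticeSubmodularity.
Variables (R : realType) (T : finType) (le : rel T) (meet : T -> T -> T)
  (rk : T -> nat).

Definition slt (a b : T) : bool := le a b && (a != b).

Definition covers (a b : T) : bool :=
  slt a b && [forall c, ~~ (slt a c && slt c b)].

Definition cadj (a b : T) : bool := covers a b || covers b a.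

(* a :: s is a walk from a to b in the covering graph (of length size s) *)
Definition cwalk (a b : T) (s : seq T) : Prop := path cadj a s /\ last a s = b.

Definition shortest_walk (a b : T) (s : seq T) : Prop :=
  cwalk a b s /\ forall s', cwalk a b s' -> (size s <= size s')%N.

Definition Iset (p q u : T) : Prop :=
  exists s, shortest_walk p q s /\ u \in p :: s.

Definition rvec (p q u : T) : R * R :=
  ((rk (meet u p))%:R - (rk (meet p q))%:R,
   (rk (meet u q))%:R - (rk (meet p q))%:R).

Definition ConvI (p q : T) (z : R * R) : Prop :=
  exists lam : T -> R,
    (forall u, 0 <= lam u) /\ (forall u, ~ Iset p q u -> lam u = 0) /\
    \sum_(u : T) lam u = 1 /\
    z = (\sum_(u : T) lam u * (rvec p q u).1,
         \sum_(u : T) lam u * (rvec p q u).2).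

Definition extreme_point (S : R * R -> Prop) (z : R * R) : Prop :=
  S z /\ forall (a b : R * R) (t : R), S a -> S b -> 0 < t < 1 ->
    z = (t * a.1 + (1 - t) * b.1, t * a.2 + (1 - t) * b.2) -> a = b.

Definition cw_maximal (S : R * R -> Prop) (z : R * R) : Prop :=
  S z /\ forall z', S z' -> z.1 <= z'.1 -> z.2 <= z'.2 -> z' = z.

Definition Eset (p q u : T) : Prop :=
  Iset p q u /\ extreme_point (ConvI p q) (rvec p q u) /\
  cw_maximal (ConvI p q) (rvec p q u).

Definition dot2 (w z : R * R) : R := w.1 * z.1 + w.2 * z.2.

Definition Ccone (p q u : T) (w : R * R) : Prop :=
  0 <= w.1 /\ 0 <= w.2 /\
  (exists z0, ConvI p q z0 /\ dot2 w z0 = dot2 w (rvec p q u)) /\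
  (forall z, ConvI p q z -> dot2 w z <= dot2 w (rvec p q u)).

Definition cone_angles (p q u : T) (ab : R * R) : Prop :=
  0 <= ab.2 /\ ab.2 <= ab.1 /\ ab.1 <= pi / 2 /\
  forall x y : R, Ccone p q u (x, y) <->
    (0 <= x /\ 0 <= y /\ y * cos ab.1 <= x * sin ab.1 /\
     x * sin ab.2 <= y * cos ab.2).

(* [C(u;p,q)] (the angles are unique when they exist) *)
Definition coefC (p q u : T) : R :=
  match pselect (exists ab, cone_angles p q u ab) with
  | left H => let ab := proj1_sig (cid H) in
      sin ab.1 / (sin ab.1 + cos ab.1) - sin ab.2 / (sin ab.2 + cos ab.2)
  | right _ => 0
  end.

(* f : T -> R \cup {oo} (represented in \bar R, never taking -oo) is
   submodular.  Terms with zero coefficient vanish since 0 * oo = 0 in \bar R,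
   and c * oo = oo for c > 0. *)
Definition submodular (f : T -> \bar R) : Prop :=
  forall p q : T,
    (f (meet p q) + \sum_(u : T | `[< Eset p q u >]) (coefC p q u)%:E * f u
       <= f p + f q)%E.

End SemilatticeSubmodularity.

(* The semilattice S_k^n.  S_k = 'I_k.+1 with 0 (= ord0) the minimum and    *)
(* 1..k pairwise incomparable.                                              *)
Section Skn.
Variables k n : nat.

Definition Skn := {ffun 'I_n -> 'I_k.+1}.

Definition leS (a b : 'I_k.+1) : bool := (a == ord0) || (a == b).

Definition leSkn (p q : Skn) : bool := [forall i, leS (p i) (q i)].

Definition meetSkn (p q : Skn) : Skn :=
  [ffun i => if p i == q i then p i else ord0].

Definition sqcupSkn (p q : Skn) : Skn :=
  [ffun i => if p i == ord0 then q i
             else if q i == ord0 then p i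
             else if p i == q i then p i else ord0].

Definition rankSkn (p : Skn) : nat := #|[set i | p i != ord0]|.

Definition k_submodular (R : realType) (f : Skn -> \bar R) : Prop :=
  forall p q : Skn, (f (meetSkn p q) + f (sqcupSkn p q) <= f p + f q)%E.

End Skn.

(* Main.v *)
Require Import Defs.
From HB Require Import structures.
From mathcomp Require Import all_boot all_order all_algebra.
From mathcomp Require Import boolp classical_sets reals ereal trigo.
From mathcomp Require Import ring lra zify.
Set Implicit Arguments.
Unset Strict Implicit.
Unset Printing Implicit Defensive.
Import Order.TTheory GRing.Theory Num.Theory.
Local Open Scope ring_scope.

Opaque rvec.
Arguments dot2 : simpl never.

Section Abs.
Variables (R : realType) (T : finType) (le : rel T) (meet : T -> T -> T)
  (rk : T -> nat) (p q u1 u2 : T) (A B M : R).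
Local Notation I := (Iset le p q).
Local Notation r := (rvec R meet rk p q).
Local Notation CI := (ConvI le meet rk p q).
Hypotheses (HI1 : forall v, I v -> (r v).1 <= A)
  (HI2 : forall v, I v -> (r v).2 <= B)
  (HI3 : forall v, I v -> (r v).1 + (r v).2 <= M)
  (Hu1 : I u1) (Hu2 : I u2) (Hr1 : r u1 = (A, M - A)) (Hr2 : r u2 = (M - B, B))
  (Hs1 : forall v, I v -> r v = r u1 -> v = u1)
  (Hs2 : forall v, I v -> r v = r u2 -> v = u2) (HM : M <= A + B).

Lemma conv_bound w K : (forall v, I v -> dot2 w (r v) <= K) ->
  forall z, CI z -> dot2 w z <= K.
Proof.
move=> H z [lam [l0 [lI [l1 ->]]]].
rewrite /dot2 /= !mulr_sumr -big_split /=.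
have -> : K = \sum_u lam u * K by rewrite -mulr_suml l1 mul1r.
apply: ler_sum => u _.
have [Iu|nIu] := pselect (I u).
  have := H u Iu; rewrite /dot2 => h.
  rewrite mulrCA [X in _ + X <= _]mulrCA -mulrDr.
  by apply: ler_wpM2l; [exact: l0|].
by rewrite lI // !mul0r !mulr0 addr0.
Qed.

Lemma sum_ind_mul (F : T -> R) v : \sum_u (u == v)%:R * F u = F v.
Proof.
rewrite (bigD1 v) //= eqxx mul1r big1 ?addr0 // => u /negbTE ->.
by rewrite mul0r.
Qed.

Lemma conv2 v1 v2 t : I v1 -> I v2 -> 0 <= t <= 1 ->
  CI (t * (r v1).1 + (1 - t) * (r v2).1, t * (r v1).2 + (1 - t) * (r v2).2).
Proof.
move=> I1 I2 /andP[t0 t1].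
exists (fun u => t * (u == v1)%:R + (1 - t) * (u == v2)%:R).
split; [|split; [|split]].
- move=> u; apply: addr_ge0; apply: mulr_ge0 => //; by rewrite ?subr_ge0.
- move=> u nI.
  have /negbTE-> : u != v1 by apply/eqP => e; apply: nI; rewrite e.
  have /negbTE-> : u != v2 by apply/eqP => e; apply: nI; rewrite e.
  by rewrite !mulr0 addr0.
- rewrite big_split /= -!mulr_sumr.
  have := sum_ind_mul (fun=> 1) v1; have := sum_ind_mul (fun=> 1) v2.
  under eq_bigr do rewrite mulr1. move=> ->.
  under eq_bigr do rewrite mulr1. move=> ->.
  by rewrite !mulr1 subrKC.
- congr pair.
  + rewrite (eq_bigr (fun u => t * ((u == v1)%:R * (r u).1) +
       (1 - t) * ((u == v2)%:R * (r u).1))); last by move=> u _; rewrite mulrDl !mulrA.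
    by rewrite big_split /= -!mulr_sumr !sum_ind_mul.
  + rewrite (eq_bigr (fun u => t * ((u == v1)%:R * (r u).2) +
       (1 - t) * ((u == v2)%:R * (r u).2))); last by move=> u _; rewrite mulrDl !mulrA.
    by rewrite big_split /= -!mulr_sumr !sum_ind_mul.
Qed.

Lemma conv_pt v : I v -> CI (r v).
Proof.
move=> Iv; have := @conv2 v v 1 Iv Iv; rewrite ler01 lexx subrr => /(_ isT).
by rewrite !mul0r !addr0 !mul1r; case: (r v).
Qed.

Lemma Ccone_iff u w : I u -> (Ccone le meet rk p q u w <->
  [/\ 0 <= w.1, 0 <= w.2 & forall v, I v -> dot2 w (r v) <= dot2 w (r u)]).
Proof.
move=> Iu; split.
- case=> [w1 [w2 [_ H]]]; split => // v Iv; exact: H _ (conv_pt Iv).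
- case=> w1 w2 H; split; [by []|split; [by []|split]].
    by exists (r u); split => //; exact: conv_pt.
  exact: conv_bound.
Qed.

Lemma bnd1 z : CI z -> z.1 <= A.
Proof.
move=> Cz; have := @conv_bound (1, 0) A _ z Cz; rewrite /dot2 /= mul1r mul0r addr0.
apply => v Iv; rewrite mul1r mul0r addr0; exact: HI1.
Qed.
Lemma bnd2 z : CI z -> z.2 <= B.
Proof.
move=> Cz; have := @conv_bound (0, 1) B _ z Cz; rewrite /dot2 /= mul1r mul0r add0r.
apply => v Iv; rewrite mul1r mul0r add0r; exact: HI2.
Qed.
Lemma bnd3 z : CI z -> z.1 + z.2 <= M.
Proof.
move=> Cz; have := @conv_bound (1, 1) M _ z Cz; rewrite /dot2 /= !mul1r.
apply => v Iv; rewrite !mul1r; exact: HI3.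
Qed.

Lemma cone_u1_pos (x y : R) : M < A + B ->
  Ccone le meet rk p q u1 (x, y) <-> [/\ 0 <= x, 0 <= y & y <= x].
Proof.
move=> cpos; rewrite Ccone_iff //= Hr1 /dot2 /=; split.
- case=> x0 y0 H; have := H _ Hu2; rewrite Hr2 /= => h; split => //; nra.
- case=> x0 y0 yx; split => // v Iv.
  have h1 := HI1 Iv; have h3 := HI3 Iv; nra.
Qed.

Lemma cone_u2_pos (x y : R) : M < A + B ->
  Ccone le meet rk p q u2 (x, y) <-> [/\ 0 <= x, 0 <= y & x <= y].
Proof.
move=> cpos; rewrite Ccone_iff //= Hr2 /dot2 /=; split.
- case=> x0 y0 H; have := H _ Hu1; rewrite Hr1 /= => h; split => //; nra.
- case=> x0 y0 yx; split => // v Iv.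
  have h1 := HI2 Iv; have h3 := HI3 Iv; nra.
Qed.

Lemma cone_u1_zero (x y : R) : M = A + B ->
  Ccone le meet rk p q u1 (x, y) <-> 0 <= x /\ 0 <= y.
Proof.
move=> c0; rewrite Ccone_iff //= Hr1 /dot2 /=; split.
- by case.
- case=> x0 y0; split => // v Iv.
  have h1 := HI1 Iv; have h3 := HI2 Iv; nra.
Qed.


Lemma trig_facts (a : R) : 0 <= a <= pi / 2 ->
  [/\ 0 <= sin a, 0 <= cos a, sin a ^+ 2 + cos a ^+ 2 = 1, sin a <= 1 & cos a <= 1].
Proof.
move=> /andP[a0 a1]; have pi0 := pi_gt0 R; split.
- apply: sin_ge0_pi; apply/andP; split => //; lra.
- apply: cos_ge0_pihalf; apply/andP; split => //; lra.
- by rewrite sin2cos2 subrK.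
- exact: sin_le1.
- exact: cos_le1.
Qed.

Lemma angles_u1 (a b : R) : 0 <= b -> b <= a -> a <= pi / 2 ->
  (forall x y : R, [/\ 0 <= x, 0 <= y & y <= x] <->
    (0 <= x /\ 0 <= y /\ y * cos a <= x * sin a /\ x * sin b <= y * cos b)) ->
  sin a / (sin a + cos a) - sin b / (sin b + cos b) = 1 / 2.
Proof.
move=> b0 ba api H.
have [sa0 ca0 sca sa1 ca1] : [/\ 0 <= sin a, 0 <= cos a, sin a ^+ 2 + cos a ^+ 2 = 1,
  sin a <= 1 & cos a <= 1] by apply: trig_facts; apply/andP; split => //; lra.
have [sb0 cb0 scb sb1 cb1] : [/\ 0 <= sin b, 0 <= cos b, sin b ^+ 2 + cos b ^+ 2 = 1,
  sin b <= 1 & cos b <= 1] by apply: trig_facts; apply/andP; split => //; lra.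
have [_ [_ [_ h10]]] := (H 1 0).1 (And3 ler01 (lexx _) ler01).
have sb : sin b = 0 by rewrite mul0r mul1r in h10; lra.
have [_ [_ [h11 _]]] := (H 1 1).1 (And3 ler01 ler01 (lexx _)).
rewrite !mul1r in h11.
have sc : sin a = cos a.
  apply/eqP; rewrite eq_le h11 andbT; rewrite leNgt; apply/negP => lt.
  suff : [/\ 0 <= (1:R), 0 <= 1 + sin a - cos a & 1 + sin a - cos a <= 1].
    by case=> _ _; lra.
  apply/H.
  split; first exact: ler01.
  split; first lra.
  split; first nra.
  by rewrite sb mulr0; apply: mulr_ge0 => //; lra.
have sa_ne0 : sin a != 0 by apply/eqP => s0; rewrite -sc s0 in sca; lra.
rewrite sb mul0r subr0 -sc; field.
by rewrite -mulr2n mulrn_eq0 negb_or sa_ne0.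
Qed.

Lemma angles_u2 (a b : R) : 0 <= b -> b <= a -> a <= pi / 2 ->
  (forall x y : R, [/\ 0 <= x, 0 <= y & x <= y] <->
    (0 <= x /\ 0 <= y /\ y * cos a <= x * sin a /\ x * sin b <= y * cos b)) ->
  sin a / (sin a + cos a) - sin b / (sin b + cos b) = 1 / 2.
Proof.
move=> b0 ba api H.
have [sa0 ca0 sca sa1 ca1] : [/\ 0 <= sin a, 0 <= cos a, sin a ^+ 2 + cos a ^+ 2 = 1,
  sin a <= 1 & cos a <= 1] by apply: trig_facts; apply/andP; split => //; lra.
have [sb0 cb0 scb sb1 cb1] : [/\ 0 <= sin b, 0 <= cos b, sin b ^+ 2 + cos b ^+ 2 = 1,
  sin b <= 1 & cos b <= 1] by apply: trig_facts; apply/andP; split => //; lra.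
have [_ [_ [h01 _]]] := (H 0 1).1 (And3 (lexx _) ler01 ler01).
have ca : cos a = 0 by rewrite mul0r mul1r in h01; lra.
have [_ [_ [_ h11]]] := (H 1 1).1 (And3 ler01 ler01 (lexx _)).
rewrite !mul1r in h11.
have sc : sin b = cos b.
  apply/eqP; rewrite eq_le h11 /=; rewrite leNgt; apply/negP => lt.
  suff : [/\ 0 <= 1 + cos b - sin b, 0 <= (1:R) & 1 + cos b - sin b <= 1].
    by case=> _ _; lra.
  apply/H.
  split; first lra.
  split; first exact: ler01.
  split; first by rewrite ca mulr0; apply: mulr_ge0 => //; lra.
  nra.
have sb_ne0 : sin b != 0 by apply/eqP => s0; rewrite -sc s0 in scb; lra.
have sa_ne0 : sin a != 0 by apply/eqP => s0; rewrite ca s0 in sca; lra.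
rewrite ca addr0 divff // -sc; field.
by rewrite -mulr2n mulrn_eq0 negb_or sb_ne0.
Qed.

Lemma angles_quad (a b : R) : 0 <= b -> b <= a -> a <= pi / 2 ->
  (forall x y : R, 0 <= x /\ 0 <= y <->
    (0 <= x /\ 0 <= y /\ y * cos a <= x * sin a /\ x * sin b <= y * cos b)) ->
  sin a / (sin a + cos a) - sin b / (sin b + cos b) = 1.
Proof.
move=> b0 ba api H.
have [sa0 ca0 sca sa1 ca1] : [/\ 0 <= sin a, 0 <= cos a, sin a ^+ 2 + cos a ^+ 2 = 1,
  sin a <= 1 & cos a <= 1] by apply: trig_facts; apply/andP; split => //; lra.
have [sb0 cb0 scb sb1 cb1] : [/\ 0 <= sin b, 0 <= cos b, sin b ^+ 2 + cos b ^+ 2 = 1,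
  sin b <= 1 & cos b <= 1] by apply: trig_facts; apply/andP; split => //; lra.
have [_ [_ [h01 _]]] := (H 0 1).1 (conj (lexx _) ler01).
have ca : cos a = 0 by rewrite mul0r mul1r in h01; lra.
have [_ [_ [_ h10]]] := (H 1 0).1 (conj ler01 (lexx _)).
have sb : sin b = 0 by rewrite mul0r mul1r in h10; lra.
have sa_ne0 : sin a != 0 by apply/eqP => s0; rewrite ca s0 in sca; lra.
by rewrite ca addr0 divff // sb mul0r subr0.
Qed.

Lemma sin_cos_pi4 : sin (pi / 4 : R) = cos (pi / 4) /\ 0 < cos (pi / 4 : R).
Proof.
have pi0 := pi_gt0 R.
have c0 : 0 < cos (pi / 4 : R) by apply: cos_gt0_pihalf; apply/andP; split; lra.
split => //; have := tan_piquarter R; rewrite /tan => h.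
by rewrite -[sin _](divfK (lt0r_neq0 c0)) h mul1r.
Qed.

Lemma coefC_u1_pos : M < A + B -> Defs.coefC R le meet rk p q u1 = 1 / 2.
Proof.
move=> cpos; rewrite /Defs.coefC; case: pselect => [H|H]; last first.
  exfalso; apply: H; exists (pi / 4, 0); rewrite /cone_angles /=.
  have pi0 := pi_gt0 R; have [sc c0] := sin_cos_pi4.
  split; first exact: lexx.
  split; first lra.
  split; first lra.
  move=> x y; rewrite cone_u1_pos // sin0 cos0 mulr0 mulr1 sc ler_pM2r //.
  by split => [[x0 y0 yx]|[x0 [y0 [yx _]]]].
case: (cid H) => [[a b] [/= b0 [ba [api Hc]]]] /=.
apply: angles_u1 => // x y; rewrite -Hc cone_u1_pos //.
Qed.

Lemma coefC_u2_pos : M < A + B -> Defs.coefC R le meet rk p q u2 = 1 / 2.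
Proof.
move=> cpos; rewrite /Defs.coefC; case: pselect => [H|H]; last first.
  exfalso; apply: H; exists (pi / 2, pi / 4); rewrite /cone_angles /=.
  have pi0 := pi_gt0 R; have [sc c0] := sin_cos_pi4.
  split; first lra.
  split; first lra.
  split; first exact: lexx.
  move=> x y; rewrite cone_u2_pos // sin_pihalf cos_pihalf mulr0 mulr1 sc ler_pM2r //.
  by split => [[x0 y0 yx]|[x0 [y0 [_ yx]]]].
case: (cid H) => [[a b] [/= b0 [ba [api Hc]]]] /=.
apply: angles_u2 => // x y; rewrite -Hc cone_u2_pos //.
Qed.

Lemma coefC_u1_zero : M = A + B -> Defs.coefC R le meet rk p q u1 = 1.
Proof.
move=> c0; rewrite /Defs.coefC; case: pselect => [H|H]; last first.
  exfalso; apply: H; exists (pi / 2, 0); rewrite /cone_angles /=.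
  have pi0 := pi_gt0 R.
  split; first exact: lexx.
  split; first lra.
  split; first exact: lexx.
  move=> x y; rewrite cone_u1_zero // sin_pihalf cos_pihalf sin0 cos0 !mulr0 !mulr1.
  by split => [[x0 y0]|[x0 [y0 _]]].
case: (cid H) => [[a b] [/= b0 [ba [api Hc]]]] /=.
apply: angles_quad => // x y; rewrite -Hc cone_u1_zero //.
Qed.

Lemma Eset_iff u : Eset R le meet rk p q u <-> u = u1 \/ u = u2.
Proof.
split.
- case=> Iu [[_ Hext] [_ Hmax]].
  have h1 := HI1 Iu; have h2 := HI2 Iu; have h3 := HI3 Iu.
  have [xle|xgt] := leP (r u).1 (M - B).
    right; apply: Hs2 => //; symmetry; apply: Hmax (conv_pt Hu2) _ _; rewrite Hr2 //=.
  have cpos : 0 < A + B - M by lra.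
  pose t := ((r u).1 - (M - B)) / (A + B - M).
  have tc : t * (A + B - M) = (r u).1 - (M - B) by rewrite /t divfK // lt0r_neq0.
  have t0 : 0 < t by rewrite /t divr_gt0 //; lra.
  have t1 : t <= 1 by rewrite /t ler_pdivrMr // mul1r; lra.
  have tt : 0 <= t <= 1 by rewrite t1 ltW.
  move: (conv2 Hu1 Hu2 tt); rewrite Hr1 Hr2 /= => Cz.
  have e1 : t * A + (1 - t) * (M - B) = (r u).1.
    by rewrite -[X in _ = X](subrK (M - B)) -tc; ring.
  have e2 : t * (M - A) + (1 - t) * B = M - (r u).1.
    by rewrite -[X in _ = M - X](subrK (M - B)) -tc; ring.
  rewrite e1 e2 in Cz.
  have ru : r u = ((r u).1, M - (r u).1).
    by symmetry; apply: Hmax Cz _ _ => /=; lra.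
  have [xA|xA] := eqVneq (r u).1 A.
    by left; apply: Hs1 => //; rewrite ru Hr1 xA.
  exfalso.
  have t1' : t < 1.
    rewrite lt_neqAle t1 andbT; apply/eqP => te; move: tc; rewrite te mul1r => tc.
    by move/eqP: xA; apply; lra.
  have := Hext (r u1) (r u2) t (conv_pt Hu1) (conv_pt Hu2).
  rewrite t0 t1' Hr1 Hr2 /= e1 e2 => /(_ isT ru) [e _]; lra.
- case=> ->.
  + split; first exact Hu1. split.
    * split; first exact: conv_pt.
      move=> a b t Ca Cb /andP[t0 t1]; rewrite Hr1 => -[ea eb].
      have := bnd1 Ca; have := bnd1 Cb; have := bnd3 Ca; have := bnd3 Cb.
      case: a ea eb Ca Cb => a1 a2; case: b => b1 b2 /= ea eb _ _ ha hb ha1 hb1.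
      have a1A : a1 = A by nra.
      have b1A : b1 = A by nra.
      subst a1 b1; congr pair; nra.
    * split; first exact: conv_pt.
      move=> z' Cz'; rewrite Hr1 /= => hz1 hz2.
      have := bnd1 Cz'; have := bnd3 Cz'.
      case: z' Cz' hz1 hz2 => z1 z2 /= _ hz1 hz2 hb1 hb3; congr pair; lra.
  + split; first exact Hu2. split.
    * split; first exact: conv_pt.
      move=> a b t Ca Cb /andP[t0 t1]; rewrite Hr2 => -[ea eb].
      have := bnd2 Ca; have := bnd2 Cb; have := bnd3 Ca; have := bnd3 Cb.
      case: a ea eb Ca Cb => a1 a2; case: b => b1 b2 /= ea eb _ _ ha hb ha1 hb1.
      have a1A : a2 = B by nra.
      have b1A : b2 = B by nra.
      subst a2 b2; congr pair; nra.
    * split; first exact: conv_pt.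
      move=> z' Cz'; rewrite Hr2 /= => hz1 hz2.
      have := bnd2 Cz'; have := bnd3 Cz'.
      case: z' Cz' hz1 hz2 => z1 z2 /= _ hz1 hz2 hb1 hb3; congr pair; lra.
Qed.

Lemma sumE (f : T -> \bar R) :
  (\sum_(u : T | `[< Eset R le meet rk p q u >])
      (Defs.coefC R le meet rk p q u)%:E * f u =
   if u1 == u2 then f u1 else (1 / 2)%:E * f u1 + (1 / 2)%:E * f u2)%E.
Proof.
have Ee : forall u, `[< Eset R le meet rk p q u >] = (u == u1) || (u == u2).
  move=> u; apply/idP/idP => [/asboolP/Eset_iff [->|->]|/orP [/eqP ->|/eqP ->]];
    rewrite ?eqxx ?orbT //; apply/asboolP/Eset_iff; by [left|right].
rewrite (eq_bigl _ _ Ee).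
case: eqP => [e|ne].
  rewrite (eq_bigl (fun u => u == u1)) => [|u]; last by rewrite -e orbb.
  rewrite big_pred1_eq coefC_u1_zero ?mul1e //.
  have : r u1 = r u2 by rewrite e.
  by rewrite Hr1 Hr2 => -[]; lra.
have cpos : M < A + B.
  rewrite lt_neqAle HM andbT; apply/eqP => eM; apply: ne; symmetry.
  by apply: Hs1 => //; rewrite Hr1 Hr2; congr pair; lra.
rewrite (bigD1 u1) ?eqxx //=.
rewrite (eq_bigl (fun u => u == u2)) => [|u]; last first.
  case: (eqVneq u u1) => [->|nu]; last by rewrite andbT.
  by rewrite /= ; apply/esym/eqP => e; apply: ne.
by rewrite big_pred1_eq coefC_u1_pos // coefC_u2_pos.
Qed.
End Abs.

Ltac atom t := first [is_var t | lazymatch t with ord0 => idtac end].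
Ltac crush := repeat match goal with
  | H : is_true (?u != ?u) |- _ => by rewrite eqxx in H
  | |- context [?u == ?u] => rewrite eqxx
  | H : is_true (?u != ?v) |- context [?u == ?v] => rewrite (negbTE H)
  | H : is_true (?u != ?v) |- context [?v == ?u] => rewrite [v == u]eq_sym (negbTE H)
  | |- context [?u == ?v] => atom u; atom v; case: (eqVneq u v) => [?|?]; subst
  | |- _ => progress rewrite /=
  end.

Ltac fin := move=> *; try done;
  match goal with |- is_true (_ <= _) => lra | |- @eq (ordinal _) _ _ => exfalso; lra | |- @eq _ _ _ => lra | |- _ => exfalso; lra end.

Section SknPart.
Variables (R : realType) (k n : nat).
Local Notation S := (Skn k n).
Local Notation O := (ord0 : 'I_k.+1).
Implicit Types (a b c x : 'I_k.+1).

Definition dl a b : nat := if a == b then 0 else if (a == O) || (b == O) then 1 else 2.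
Definition mz a b : bool := (a == b) && (a != O).
Definition Xc a b x : R := (mz x a)%:R - (mz a b)%:R.
Definition Yc a b x : R := (mz x b)%:R - (mz a b)%:R.
Definition Ap a b : R := ((a != O) && (a != b))%:R.
Definition Dd a b : R := (a != b)%:R.
Definition inI a b x : bool := dl a x + dl x b == dl a b.
Definition U1c a b := if a != O then a else b.

Lemma dl_tri a b c : (dl a c <= dl a b + dl b c)%N.
Proof. rewrite /dl; crush; done. Qed.
Lemma dl_sym a b : dl a b = dl b a.
Proof. rewrite /dl; crush; done. Qed.

Lemma c1 a b x : inI a b x -> Xc a b x <= Ap a b.
Proof. rewrite /inI /Xc /Ap /mz /dl; crush => //=; fin. Qed.
Lemma c2 a b x : inI a b x -> Yc a b x <= Ap b a.
Proof. rewrite /inI /Yc /Ap /mz /dl; crush => //=; fin. Qed.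
Lemma c3 a b x : inI a b x -> Xc a b x + Yc a b x <= Dd a b.
Proof. rewrite /inI /Xc /Yc /Dd /mz /dl; crush => //=; fin. Qed.
Lemma c4 a b : Dd a b <= Ap a b + Ap b a.
Proof. rewrite /Ap /Dd; crush => //=; fin. Qed.
Lemma c5 a b : inI a b (U1c a b).
Proof. rewrite /inI /U1c /dl; crush => //=. Qed.
Lemma c5' a b : inI a b (U1c b a).
Proof. rewrite /inI /U1c /dl; crush => //=. Qed.
Lemma c6 a b : Xc a b (U1c a b) = Ap a b.
Proof. rewrite /Xc /U1c /Ap /mz; crush => //=; fin. Qed.
Lemma c7 a b : Yc a b (U1c a b) = Dd a b - Ap a b.
Proof. rewrite /Yc /U1c /Ap /Dd /mz; crush => //=; fin. Qed.
Lemma c9 a b : Xc a b (U1c b a) = Dd a b - Ap b a.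
Proof. rewrite /Xc /U1c /Ap /Dd /mz; crush => //=; fin. Qed.
Lemma c10 a b : Yc a b (U1c b a) = Ap b a.
Proof. rewrite /Yc /U1c /Ap /mz; crush => //=; fin. Qed.
Lemma c11 a b x : inI a b x -> Xc a b x = Ap a b ->
  Xc a b x + Yc a b x = Dd a b -> x = U1c a b.
Proof. rewrite /inI /Xc /Yc /Ap /Dd /U1c /mz /dl; crush => //=; fin. Qed.
Lemma c12 a b x : inI a b x -> Yc a b x = Ap b a ->
  Xc a b x + Yc a b x = Dd a b -> x = U1c b a.
Proof. rewrite /inI /Xc /Yc /Ap /Dd /U1c /mz /dl; crush => //=; fin. Qed.
Lemma dl_eq0 a b : dl a b = 0%N -> a = b.
Proof. rewrite /dl; crush => //=. Qed.

Definition D (a b : S) : nat := (\sum_i dl (a i) (b i))%N.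
Definition upd (a : S) (i : 'I_n) (v : 'I_k.+1) : S :=
  [ffun l => if l == i then v else a l].

Lemma D_sym (a : S) (b : S) : D a b = D b a.
Proof. by apply: eq_bigr => i _; rewrite dl_sym. Qed.

Lemma D_tri (a : S) (b : S) (c : S) : (D a c <= D a b + D b c)%N.
Proof. rewrite /D -big_split; apply: leq_sum => i _; exact: dl_tri. Qed.

Lemma D_upd (a : S) i v (b : S) : (D (upd a i v) b + dl (a i) (b i) = D a b + dl v (b i))%N.
Proof.
rewrite /D (bigD1 i) //= [in RHS](bigD1 i) //= ffunE eqxx.
have -> : (\sum_(l | l != i) dl (upd a i v l) (b l) = \sum_(l | l != i) dl (a l) (b l))%N.
  by apply: eq_bigr => l /negbTE nl; rewrite ffunE nl.
set X := (\sum_(l | l != i) dl (a l) (b l))%N; lia.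
Qed.

Lemma D_upd_self (a : S) i v : D a (upd a i v) = dl (a i) v.
Proof.
rewrite /D (bigD1 i) //= ffunE eqxx big1 ?addn0 // => l nl.
by rewrite ffunE (negbTE nl) /dl eqxx.
Qed.

Lemma D_eq0 (a : S) (b : S) : D a b = 0%N -> a = b.
Proof.
move/eqP; rewrite /D sum_nat_eq0 => /forallP h; apply/ffunP => i.
by apply: dl_eq0; apply/eqP; have := h i.
Qed.

Lemma exists_diff (a b : S) : a != b -> exists i, a i != b i.
Proof.
move=> nab; case: (pickP (fun i => a i != b i)) => [i ni|h]; first by exists i.
by case/eqP: nab; apply/ffunP => i; move: (h i) => /negbFE/eqP.
Qed.

Lemma leS_anti x y : leS x y -> leS y x -> x = y.
Proof. rewrite /leS; crush => //. Qed.

Lemma covers_upd (a : S) i v : a i = O -> v != O -> covers (@leSkn k n) a (upd a i v).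
Proof.
move=> ai v0; rewrite /covers /slt; apply/andP; split.
  apply/andP; split.
    apply/forallP => l; rewrite /leS /upd ffunE; case: (eqVneq l i) => [->|_].
      by rewrite ai eqxx.
    by rewrite eqxx orbT.
  apply/eqP => /ffunP /(_ i); rewrite ffunE eqxx ai => e.
  by rewrite -e eqxx in v0.
apply/forallP => c; apply/negP.
move=> /and3P[/andP[/forallP ac nac] /forallP cb ncb].
have cl : forall l, l != i -> c l = a l.
  move=> l nl; apply: leS_anti; last exact: ac.
  by have := cb l; rewrite ffunE (negbTE nl).
have := cb i; rewrite /leS ffunE eqxx => /orP[/eqP ci|/eqP ci].
  move/eqP: nac; apply; apply/ffunP => l; case: (eqVneq l i) => [->|nl].
    by rewrite ci ai.
  by rewrite cl.
move/eqP: ncb; apply; apply/ffunP => l; rewrite ffunE; case: (eqVneq l i) => [->|nl].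
  by [].
by rewrite cl.
Qed.

Lemma covers_D (a : S) (b : S) : covers (@leSkn k n) a b -> (D a b <= 1)%N.
Proof.
case/andP => /andP[/forallP ab nab] /forallP nc.
have [i ni] := exists_diff nab.
have ai : a i = O.
  by have := ab i; rewrite /leS => /orP[/eqP //|/eqP e]; rewrite e eqxx in ni.
have bi : b i != O by rewrite -ai eq_sym.
have bE : b = upd a i (b i).
  apply/eqP/negPn/negP => nb.
  have := nc (upd a i (b i)); rewrite negb_and => /orP[] /negP [].
    by case/andP: (covers_upd ai bi).
  rewrite /slt eq_sym nb andbT; apply/forallP => l; rewrite ffunE.
  by case: (eqVneq l i) => [->|_]; [rewrite /leS eqxx orbT|exact: ab].
rewrite bE D_upd_self ai /dl; crush => //.
Qed.

Lemma cadj_D (a : S) (b : S) : cadj (@leSkn k n) a b -> (D a b <= 1)%N.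
Proof. case/orP => h; [exact: covers_D|rewrite D_sym; exact: covers_D]. Qed.

Lemma walk_D (a : S) (b : S) s : cwalk (@leSkn k n) a b s -> (D a b <= size s)%N.
Proof.
elim: s a => [|x s IH] a [/= P L].
  by rewrite -L /D big1 // => i _; rewrite /dl eqxx.
case/andP: P => ax P.
have := IH x (conj P L); have := cadj_D ax; have := D_tri a x b.
rewrite [size _]/=; lia.
Qed.

Lemma dl_step x y : x != y -> (dl (if x == O then y else O) y + 1 = dl x y)%N.
Proof. rewrite /dl; crush => //. Qed.

Lemma walk_exists (a : S) (b : S) : exists s, cwalk (@leSkn k n) a b s /\ size s = D a b.
Proof.
move: {2}(D a b) (leqnn (D a b)) => N; elim: N a => [|N IH] a hN.
  have e : D a b = 0%N by lia.
  by exists [::]; split => //; split => //=; rewrite (D_eq0 e).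
case: (eqVneq a b) => [->|nab].
  exists [::]; split; first by [].
  by rewrite /D big1 // => i _; rewrite /dl eqxx.
have [i ni] := exists_diff nab.
pose v := if a i == O then b i else O.
pose a' := upd a i v.
have adj : cadj (@leSkn k n) a a'.
  case: (eqVneq (a i) O) => ai.
    apply/orP; left; apply: covers_upd => //; rewrite /v ai eqxx.
    by move: ni; rewrite ai eq_sym.
  apply/orP; right.
  have -> : a = upd a' i (a i).
    by apply/ffunP => l; rewrite !ffunE; case: eqVneq => [->|].
  by apply: covers_upd => //; rewrite /a' ffunE eqxx /v (negbTE ai).
have Dd : (D a' b + 1 = D a b)%N.
  have := D_upd a i v b; have := dl_step ni; rewrite -/v -/a'; lia.
have [s [w z]] := IH a' ltac:(lia).
exists (a' :: s); split; last by rewrite /= z; lia.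
by case: w => P L; split => //=; rewrite adj P.
Qed.

Lemma Iset_D p q u : Iset (@leSkn k n) p q u <-> (D p u + D u q = D p q)%N.
Proof.
split.
- case=> s [[[P L] Hmin] us].
  have [s0 [w0 z0]] := walk_exists p q.
  have h1 := Hmin _ w0; have h2 := walk_D (conj P L).
  move: P L h1 h2; case/splitPl: us => s1 s2 lu.
  rewrite cat_path last_cat lu size_cat z0 => /andP[P1 P2] L h1 h2.
  have := walk_D (conj P1 lu); have := walk_D (conj P2 L); have := D_tri p u q.
  lia.
- move=> e; have [s1 [w1 z1]] := walk_exists p u; have [s2 [w2 z2]] := walk_exists u q.
  exists (s1 ++ s2); split.
    split.
      case: w1 w2 => P1 L1 [P2 L2]; split; first by rewrite cat_path P1 L1 P2.
      by rewrite last_cat L1.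
    by move=> s' w'; have := walk_D w'; rewrite size_cat z1 z2 e.
  by case: w1 => _ L1; rewrite -L1 -cat_cons mem_cat mem_last.
Qed.

Lemma D_split p q u : (D p u + D u q = D p q)%N <-> forall i, inI (p i) (q i) (u i).
Proof.
have H : (\sum_i dl (p i) (q i) <= \sum_i (dl (p i) (u i) + dl (u i) (q i))
   ?= iff [forall i, inI (p i) (q i) (u i)])%N.
  by apply: leqif_sum => i _; split; [exact: dl_tri|rewrite /inI eq_sym].
rewrite /D -big_split /=; case: H => _ HC; split.
  by move=> e i; move: HC; rewrite e eqxx => /esym /forallP; apply.
by move=> h; apply/eqP; rewrite eq_sym HC; apply/forallP.
Qed.

Lemma Iset_iff p q u : Iset (@leSkn k n) p q u <-> forall i, inI (p i) (q i) (u i).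
Proof. by rewrite Iset_D D_split. Qed.

Definition U1 (p q : S) : S := [ffun i => U1c (p i) (q i)].
Definition Asum (p q : S) : R := \sum_i Ap (p i) (q i).
Definition Msum (p q : S) : R := \sum_i Dd (p i) (q i).

Lemma rank_sum (y : S) : ((rankSkn y)%:R : R) = \sum_i ((y i != O)%:R).
Proof.
rewrite /rankSkn -sum1_card natr_sum big_mkcond /=; apply: eq_bigr => i _.
by rewrite inE; case: (y i != O).
Qed.

Transparent rvec.
Lemma rvecE (p q v : S) : rvec R (@meetSkn k n) (@rankSkn k n) p q v =
  (\sum_i Xc (p i) (q i) (v i), \sum_i Yc (p i) (q i) (v i)).
Proof.
rewrite /rvec !rank_sum -!sumrB; congr pair; apply: eq_bigr => i _;
  rewrite /Xc /Yc /mz !ffunE; move: (v i) (p i) (q i) => x a b; crush => //.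
Qed.
Opaque rvec.

Lemma sum_eq_le (F G : 'I_n -> R) : (forall i, F i <= G i) ->
  \sum_i F i = \sum_i G i -> forall i, F i = G i.
Proof.
move=> h e i; apply/eqP; rewrite eq_sym -subr_eq0; apply/eqP.
apply: (@psumr_eq0P _ _ predT (fun i => G i - F i)) => //.
  by move=> j _; rewrite subr_ge0.
by rewrite sumrB e subrr.
Qed.

Section PQ.
Variables p q : S.
Local Notation r := (rvec R (@meetSkn k n) (@rankSkn k n) p q).
Local Notation I := (Iset (@leSkn k n) p q).

Lemma HI1 v : I v -> (r v).1 <= Asum p q.
Proof. move/Iset_iff => h; rewrite rvecE /=; apply: ler_sum => i _; exact: c1. Qed.
Lemma HI2 v : I v -> (r v).2 <= Asum q p.
Proof. move/Iset_iff => h; rewrite rvecE /=; apply: ler_sum => i _; exact: c2. Qed.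
Lemma HI3 v : I v -> (r v).1 + (r v).2 <= Msum p q.
Proof.
move/Iset_iff => h; rewrite rvecE /= -big_split; apply: ler_sum => i _; exact: c3.
Qed.
Lemma Hu1 : I (U1 p q).
Proof. by apply/Iset_iff => i; rewrite ffunE; exact: c5. Qed.
Lemma Hu2 : I (U1 q p).
Proof. by apply/Iset_iff => i; rewrite ffunE; exact: c5'. Qed.
Lemma Hr1 : r (U1 p q) = (Asum p q, Msum p q - Asum p q).
Proof.
rewrite rvecE /Msum /Asum -sumrB; congr pair; apply: eq_bigr => i _;
  by rewrite ffunE ?c6 ?c7.
Qed.
Lemma Hr2 : r (U1 q p) = (Msum p q - Asum q p, Asum q p).
Proof.
rewrite rvecE /Msum /Asum -sumrB; congr pair; apply: eq_bigr => i _;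
  by rewrite ffunE ?c9 ?c10.
Qed.
Lemma Hs1 v : I v -> r v = r (U1 p q) -> v = U1 p q.
Proof.
move=> Iv; rewrite Hr1 rvecE => -[e1 e2]; have hI := (Iset_iff _ _ _).1 Iv.
have eX := sum_eq_le (fun i => c1 (hI i)) e1.
have eXY : forall i, Xc (p i) (q i) (v i) + Yc (p i) (q i) (v i) = Dd (p i) (q i).
  apply: sum_eq_le => [i|]; first exact: c3.
  by rewrite big_split /= e1 e2 /Msum addrC subrK.
by apply/ffunP => i; rewrite ffunE; apply: c11.
Qed.
Lemma Hs2 v : I v -> r v = r (U1 q p) -> v = U1 q p.
Proof.
move=> Iv; rewrite Hr2 rvecE => -[e1 e2]; have hI := (Iset_iff _ _ _).1 Iv.
have eY := sum_eq_le (fun i => c2 (hI i)) e2.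
have eXY : forall i, Xc (p i) (q i) (v i) + Yc (p i) (q i) (v i) = Dd (p i) (q i).
  apply: sum_eq_le => [i|]; first exact: c3.
  by rewrite big_split /= e1 e2 /Msum subrK.
by apply/ffunP => i; rewrite ffunE; apply: c12.
Qed.
Lemma HM : Msum p q <= Asum p q + Asum q p.
Proof. rewrite /Msum /Asum -big_split; apply: ler_sum => i _; exact: c4. Qed.

Lemma sumSkn (f : S -> \bar R) :
  (\sum_(u : S | `[< Eset R (@leSkn k n) (@meetSkn k n) (@rankSkn k n) p q u >])
      (Defs.coefC R (@leSkn k n) (@meetSkn k n) (@rankSkn k n) p q u)%:E * f u =
   if U1 p q == U1 q p then f (U1 p q)
   else (1 / 2)%:E * f (U1 p q) + (1 / 2)%:E * f (U1 q p))%E.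
Proof. exact: (sumE HI1 HI2 HI3 Hu1 Hu2 Hr1 Hr2 Hs1 Hs2 HM). Qed.
End PQ.

Ltac ident p q := apply/ffunP; let i := fresh "i" in intro i; rewrite !ffunE /U1c;
  move: (p i) (q i) => ? ?; crush => //.

Lemma U1_sqcup (p q : S) : U1 p q = U1 q p -> U1 p q = sqcupSkn p q.
Proof.
move/ffunP => h; apply/ffunP => i; move: (h i) => /eqP; rewrite !ffunE /U1c.
move: (p i) (q i) => a b; crush => //.
Qed.
Lemma id1 (p q : S) : sqcupSkn p (sqcupSkn p q) = U1 p q.
Proof. ident p q. Qed.
Lemma id2 (p q : S) : sqcupSkn q (sqcupSkn p q) = U1 q p.
Proof. ident p q. Qed.
Lemma id3 (p q : S) : meetSkn (meetSkn p (sqcupSkn p q)) (meetSkn q (sqcupSkn p q)) = meetSkn p q.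
Proof. ident p q. Qed.
Lemma id4 (p q : S) : sqcupSkn (meetSkn p (sqcupSkn p q)) (meetSkn q (sqcupSkn p q)) = sqcupSkn p q.
Proof. ident p q. Qed.
Lemma id5 (p q : S) : U1 (U1 p q) (U1 q p) = U1 p q.
Proof. ident p q. Qed.
Lemma id6 (p q : S) : U1 (U1 q p) (U1 p q) = U1 q p.
Proof. ident p q. Qed.
Lemma id7 (p q : S) : meetSkn (U1 p q) (U1 q p) = sqcupSkn p q.
Proof. ident p q. Qed.

Lemma fin_or_oo (x : \bar R) : x != -oo%E -> x = +oo%E \/ exists r, x = r%:E.
Proof. by case: x => [r| |] // _; [right; exists r|left]. Qed.

Lemma half_oo : ((1 / 2 : R)%:E * +oo = +oo)%E.
Proof. by rewrite mulry gtr0_sg ?mul1e // divr_gt0. Qed.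

Lemma oo_le_fin (x : R) : (+oo <= x%:E)%E = false.
Proof. by rewrite leye_eq. Qed.

Lemma weak1 (a b c d e g h i : \bar R) :
  a != -oo%E -> b != -oo%E -> c != -oo%E -> d != -oo%E -> e != -oo%E ->
  g != -oo%E -> h != -oo%E -> i != -oo%E ->
  (c + d <= a + b -> e + h <= a + d -> g + i <= b + d -> c + d <= e + g ->
   c + ((1 / 2)%:E * h + (1 / 2)%:E * i) <= a + b)%E.
Proof.
move=> ha hb hc hd he hg hh hi E1 E2 E3 E4.
have [ea|[a' ea]] := fin_or_oo ha; first by rewrite ea addye // leey.
have [eb|[b' eb]] := fin_or_oo hb; first by rewrite eb addey // leey.
subst a b.
have [ec|[c' ec]] := fin_or_oo hc; first by move: E1; rewrite ec addye // -EFinD oo_le_fin.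
have [ed|[d' ed]] := fin_or_oo hd; first by move: E1; rewrite ed addey // -EFinD oo_le_fin.
subst c d.
have [ee|[e' ee]] := fin_or_oo he; first by move: E2; rewrite ee addye // -EFinD oo_le_fin.
have [eh|[h' eh]] := fin_or_oo hh; first by move: E2; rewrite eh addey // -EFinD oo_le_fin.
have [eg|[g' eg]] := fin_or_oo hg; first by move: E3; rewrite eg addye // -EFinD oo_le_fin.
have [ei|[i' ei]] := fin_or_oo hi; first by move: E3; rewrite ei addey // -EFinD oo_le_fin.
subst e h g i.
move: E1 E2 E3 E4; rewrite -!EFinM -!EFinD !lee_fin; lra.
Qed.

Lemma weak2 (a b c d h i : \bar R) :
  a != -oo%E -> b != -oo%E -> c != -oo%E -> d != -oo%E ->
  h != -oo%E -> i != -oo%E ->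
  (c + ((1 / 2)%:E * h + (1 / 2)%:E * i) <= a + b ->
   d + ((1 / 2)%:E * h + (1 / 2)%:E * i) <= h + i -> c + d <= a + b)%E.
Proof.
move=> ha hb hc hd hh hi W1 W2.
have [ea|[a' ea]] := fin_or_oo ha; first by rewrite ea addye // leey.
have [eb|[b' eb]] := fin_or_oo hb; first by rewrite eb addey // leey.
subst a b.
have [eh|[h' eh]] := fin_or_oo hh; have [ei|[i' ei]] := fin_or_oo hi; subst h i.
- by move: W1; rewrite half_oo addey // -EFinD oo_le_fin.
- by move: W1; rewrite half_oo -EFinM addye // addey // -EFinD oo_le_fin.
- by move: W1; rewrite half_oo -EFinM addey // addey // -EFinD oo_le_fin.
have [ec|[c' ec]] := fin_or_oo hc.
  by move: W1; rewrite ec -!EFinM -EFinD addye // -EFinD oo_le_fin.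
have [ed|[d' ed]] := fin_or_oo hd.
  by move: W2; rewrite ed -!EFinM -EFinD addye // -EFinD oo_le_fin.
subst c d.
move: W1 W2; rewrite -!EFinM -!EFinD !lee_fin; lra.
Qed.
End SknPart.

Theorem theorem3p12 (R : realType) (k n : nat) (hk : (2 <= k)%N) (hn : (1 <= n)%N)
  (f : Skn k n -> \bar R) (hf : forall p, f p <> -oo%E) :
  k_submodular f <-> submodular (@leSkn k n) (@meetSkn k n) (@rankSkn k n) f.
Proof.
have nf : forall p, f p != -oo%E by move=> p; apply/eqP.
rewrite /k_submodular /submodular; split => H p q.
- rewrite sumSkn; case: eqP => [e|ne].
    by rewrite (U1_sqcup e); apply: H.
  have E1 := H p q.
  have E2 := H p (sqcupSkn p q); rewrite id1 in E2.
  have E3 := H q (sqcupSkn p q); rewrite id2 in E3.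
  have E4 := H (meetSkn p (sqcupSkn p q)) (meetSkn q (sqcupSkn p q)).
  rewrite id3 id4 in E4.
  by apply: (weak1 _ _ _ _ _ _ _ _ E1 E2 E3 E4); apply: nf.
- case: (eqVneq (U1 p q) (U1 q p)) => [e|ne].
    by have := H p q; rewrite sumSkn e eqxx -e (U1_sqcup e).
  have W1 := H p q; rewrite sumSkn (negbTE ne) in W1.
  have W2 := H (U1 p q) (U1 q p); rewrite sumSkn id5 id6 id7 (negbTE ne) in W2.
  by apply: (weak2 _ _ _ _ _ _ W1 W2); apply: nf.
Qed.
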